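(* Let $n\ge 2$ be an integer. No relative equilibrium of the Newtonian planar $(1+n)$-body problem whose configuration consists of a central mass at the origin and a regular $n$-gon centered at the origin is really perverse.
   Context: The Newtonian planar $N$-body problem (gravitational constant $1$): bodies with masses $\mu_i>0$ at positions $r_i\in\mathbb{C}$ satisfy $\mu_i\ddot r_i=\sum_{j\ne i}\mu_i\mu_j\,\frac{r_j-r_i}{|r_j-r_i|^3}$. A relative equilibrium (angular velocity $1$) is a motion $r_i(t)=r_ie^{it}$ that is a solution. A mass system for this configuration is a pair $(m_0,m_1)$ of positive numbers: mass $m_0$ at the center and mass $m_1$ at every vertex of the $n$-gon; total mass $m_0+nm_1$, center of mass at the origin. The relative equilibrium is really perverse if there exist two distinct mass systems with the same total mass and the same center of mass for each of which $r_i(t)=r_ie^{it}$ is a solution. *)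

(* Defs.v *)
From Stdlib Require Import Reals Lra.
From Coquelicot Require Import Coquelicot.
Open Scope R_scope.

(* A planar configuration of N+1 bodies indexed 0..N: coordinates of body i. *)
Definition config := nat -> R * R.

Definition central_ngon (n : nat) (rho phi : R) : config :=
  fun i => match i with
           | O => (0, 0)
           | S _ => (rho * cos (phi + 2 * PI * INR i / INR n),
                     rho * sin (phi + 2 * PI * INR i / INR n))
           end.

Definition mass_sys (m0 m1 : R) : nat -> R :=
  fun i => match i with O => m0 | S _ => m1 end.

Definition dist2 (p q : R * R) : R := sqrt ((fst q - fst p) ^ 2 + (snd q - snd p) ^ 2).

(* Newtonian force (G = 1) on body i, coordinates x and y, bodies 0..N. *)
Definition force_x (N : nat) (mu : nat -> R) (q : nat -> R * R) (i : nat) : R :=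
  sum_f_R0 (fun j => if Nat.eq_dec j i then 0 else
     mu i * mu j * (fst (q j) - fst (q i)) / (dist2 (q i) (q j)) ^ 3) N.
Definition force_y (N : nat) (mu : nat -> R) (q : nat -> R * R) (i : nat) : R :=
  sum_f_R0 (fun j => if Nat.eq_dec j i then 0 else
     mu i * mu j * (snd (q j) - snd (q i)) / (dist2 (q i) (q j)) ^ 3) N.

(* r_i(t) = r_i e^{it} *)
Definition rot_motion (r : config) (i : nat) (t : R) : R * R :=
  (fst (r i) * cos t - snd (r i) * sin t, fst (r i) * sin t + snd (r i) * cos t).

Definition is_solution (N : nat) (mu : nat -> R) (q : nat -> R -> R * R) : Prop :=
  forall i, (i <= N)%nat ->
    (forall t, ex_derive (fun s => fst (q i s)) t) /\
    (forall t, ex_derive (fun s => snd (q i s)) t) /\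
    (forall t, exists ax ay,
        is_derive (Derive (fun s => fst (q i s))) t ax /\
        is_derive (Derive (fun s => snd (q i s))) t ay /\
        mu i * ax = force_x N mu (fun j => q j t) i /\
        mu i * ay = force_y N mu (fun j => q j t) i).

Definition total_mass (N : nat) (mu : nat -> R) : R := sum_f_R0 mu N.

Definition center_of_mass (N : nat) (mu : nat -> R) (r : config) : R * R :=
  (sum_f_R0 (fun j => mu j * fst (r j)) N / total_mass N mu,
   sum_f_R0 (fun j => mu j * snd (r j)) N / total_mass N mu).

Definition really_perverse (n : nat) (r : config) : Prop :=
  exists m0 m1 m0' m1' : R,
    0 < m0 /\ 0 < m1 /\ 0 < m0' /\ 0 < m1' /\
    (m0, m1) <> (m0', m1') /\
    center_of_mass n (mass_sys m0 m1) r = (0, 0) /\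
    center_of_mass n (mass_sys m0' m1') r = (0, 0) /\
    total_mass n (mass_sys m0 m1) = total_mass n (mass_sys m0' m1') /\
    center_of_mass n (mass_sys m0 m1) r = center_of_mass n (mass_sys m0' m1') r /\
    is_solution n (mass_sys m0 m1) (rot_motion r) /\
    is_solution n (mass_sys m0' m1') (rot_motion r).

(* Main.v *)
Require Import Defs.
From Stdlib Require Import Reals.
From Coquelicot Require Import Coquelicot.
From Stdlib Require Import Lra Lia Factorial Machin ZArith QArith Qreals Qround List FunctionalExtensionality.
Open Scope R_scope.


Lemma fact_INR_S n : INR (fact (S n)) = INR (S n) * INR (fact n).
Proof. rewrite <- mult_INR. reflexivity. Qed.

Ltac fact_simpl_tac := repeat rewrite fact_INR_S; simpl INR.

Lemma sinL_eq x : sin_approx x 5 = x - x^3/6 + x^5/120 - x^7/5040 + x^9/362880 - x^11/39916800.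
Proof. unfold sin_approx, sin_term. cbn [sum_f_R0 Nat.mul Nat.add]. fact_simpl_tac. field. Qed.
Lemma sinU_eq x : sin_approx x 6 = x - x^3/6 + x^5/120 - x^7/5040 + x^9/362880 - x^11/39916800 + x^13/6227020800.
Proof. unfold sin_approx, sin_term. cbn [sum_f_R0 Nat.mul Nat.add]. fact_simpl_tac. field. Qed.
Lemma cosU_eq x : cos_approx x 6 = 1 - x^2/2 + x^4/24 - x^6/720 + x^8/40320 - x^10/3628800 + x^12/479001600.
Proof. unfold cos_approx, cos_term. cbn [sum_f_R0 Nat.mul Nat.add]. fact_simpl_tac. field. Qed.
Lemma cosL_eq x : cos_approx x 5 = 1 - x^2/2 + x^4/24 - x^6/720 + x^8/40320 - x^10/3628800.
Proof. unfold cos_approx, cos_term. cbn [sum_f_R0 Nat.mul Nat.add]. fact_simpl_tac. field. Qed.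


Lemma PI_bounds : 103993/33102 <= PI <= 355/113.
Proof.
  destruct (PI_2_3_7_ineq 6) as [H1 H2].
  unfold tg_alt, PI_2_3_7_tg, Ratan_seq in H1, H2.
  cbn [sum_f_R0 Nat.mul Nat.add] in H1, H2.
  simpl INR in H1, H2. simpl pow in H1, H2.
  split; lra.
Qed.


Definition bB := 3927/2500.

Lemma zpow_facts z : 0 <= z <= bB^2 ->
  0 <= z^2 <= (bB^2)^2 /\ 0 <= z^3 <= (bB^2)^3 /\ 0 <= z^4 <= (bB^2)^4 /\
  0 <= z^5 <= (bB^2)^5 /\ 0 <= z^6 <= (bB^2)^6.
Proof.
  intros H. repeat split; try (apply pow_le; lra); apply pow_incr; lra.
Qed.

Lemma x_le_bB x : x <= PI/2 -> x <= bB.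
Proof. intros. pose proof PI_bounds. unfold bB. lra. Qed.

Definition pU (x : R) := 1 - x^2/3 - x^4/45 - 2*x^6/945 - x^8/4725.

Lemma cot_ub x : 0 < x -> x <= PI/2 ->
  cos x / sin x <= 1/x - x/3 - x^3/45 - 2*x^5/945 - x^7/4725.
Proof.
  intros Hx Hx2.
  pose proof PI_bounds as HPI.
  assert (Hs : 0 < sin x) by (apply sin_gt_0; lra).
  destruct (cos_bound x 2) as [_ Hc]; [lra|lra|].
  destruct (sin_bound x 2) as [Hs2 _]; [lra|lra|].
  change (2 * (2 + 1))%nat with 6%nat in Hc.
  change (2 * 2 + 1)%nat with 5%nat in Hs2.
  rewrite cosU_eq in Hc. rewrite sinL_eq in Hs2.
  pose proof (x_le_bB x Hx2) as Hb.
  assert (Hz : 0 <= x^2 <= bB^2) by (split; [apply pow_le; lra | apply pow_incr; lra]).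
  destruct (zpow_facts _ Hz) as (Z2 & Z3 & Z4 & Z5 & Z6).
  assert (Hp : 0 <= pU x).
  { unfold pU. replace (x^4) with ((x^2)^2) by ring. replace (x^6) with ((x^2)^3) by ring.
    replace (x^8) with ((x^2)^4) by ring. unfold bB in *. lra. }
  assert (HR : 0 <= (2/93555) + (-70349/50295168000)*(x^2) + (277/7544275200)*(x^2)^2
              + (-1/1886068800)*(x^2)^3 + (1/188606880000)*(x^2)^4).
  { unfold bB in *. lra. }
  assert (Hkey : x * cos x <= pU x * sin x).
  { assert (Hx11 : 0 <= x^11) by (apply pow_le; lra).
    assert (E : pU x * (x - x^3/6 + x^5/120 - x^7/5040 + x^9/362880 - x^11/39916800)
               - x * (1 - x^2/2 + x^4/24 - x^6/720 + x^8/40320 - x^10/3628800 + x^12/479001600)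
             = x^11 * ((2/93555) + (-70349/50295168000)*(x^2) + (277/7544275200)*(x^2)^2
              + (-1/1886068800)*(x^2)^3 + (1/188606880000)*(x^2)^4)) by (unfold pU; field).
    assert (0 <= x^11 * ((2/93555) + (-70349/50295168000)*(x^2) + (277/7544275200)*(x^2)^2
              + (-1/1886068800)*(x^2)^3 + (1/188606880000)*(x^2)^4)) by (apply Rmult_le_pos; lra).
    assert (pU x * (x - x^3/6 + x^5/120 - x^7/5040 + x^9/362880 - x^11/39916800) <= pU x * sin x)
      by (apply Rmult_le_compat_l; lra).
    assert (x * cos x <= x * (1 - x^2/2 + x^4/24 - x^6/720 + x^8/40320 - x^10/3628800 + x^12/479001600))
      by (apply Rmult_le_compat_l; lra).
    lra. }
  replace (1/x - x/3 - x^3/45 - 2*x^5/945 - x^7/4725) with (pU x / x) by (unfold pU; field; lra).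
  assert (E : cos x / sin x - pU x / x = (x * cos x - pU x * sin x) * / (x * sin x)) by (field; lra).
  assert (0 < / (x * sin x)) by (apply Rinv_0_lt_compat; nra).
  assert ((x * cos x - pU x * sin x) * / (x * sin x) <= 0) by nra.
  lra.
Qed.

Definition qL (x : R) := pU x - x^10/10000.

Lemma cot_lb x : 0 < x -> x <= PI/2 ->
  1/x - x/3 - x^3/45 - 2*x^5/945 - x^7/4725 - x^9/10000 <= cos x / sin x.
Proof.
  intros Hx Hx2.
  pose proof PI_bounds as HPI.
  assert (Hs : 0 < sin x) by (apply sin_gt_0; lra).
  destruct (cos_bound x 2) as [Hc _]; [lra|lra|].
  destruct (sin_bound x 2) as [_ Hs2]; [lra|lra|].
  change (2 * 2 + 1)%nat with 5%nat in Hc.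
  change (2 * (2 + 1))%nat with 6%nat in Hs2.
  rewrite cosL_eq in Hc. rewrite sinU_eq in Hs2.
  pose proof (x_le_bB x Hx2) as Hb.
  assert (Hz : 0 <= x^2 <= bB^2) by (split; [apply pow_le; lra | apply pow_incr; lra]).
  destruct (zpow_facts _ Hz) as (Z2 & Z3 & Z4 & Z5 & Z6).
  assert (Hcos : 0 <= cos x) by (apply cos_ge_0; lra).
  assert (Hkey : qL x * sin x <= x * cos x).
  { destruct (Rle_or_lt (qL x) 0) as [Hq|Hq].
    - assert (qL x * sin x <= 0) by nra. nra.
    - assert (HR : 0 <= (14711/187110000) + (-49921097/3269185920000)*(x^2)
         + (39066949/49037788800000)*(x^2)^2 + (-315599/16345929600000)*(x^2)^3
         + (79621/294226732800000)*(x^2)^4 + (-661/267478848000000)*(x^2)^5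
         + (1/62270208000000)*(x^2)^6) by (unfold bB in *; lra).
      assert (Hx11 : 0 <= x^11) by (apply pow_le; lra).
      assert (E : x * (1 - x^2/2 + x^4/24 - x^6/720 + x^8/40320 - x^10/3628800)
          - qL x * (x - x^3/6 + x^5/120 - x^7/5040 + x^9/362880 - x^11/39916800 + x^13/6227020800)
          = x^11 * ((14711/187110000) + (-49921097/3269185920000)*(x^2)
         + (39066949/49037788800000)*(x^2)^2 + (-315599/16345929600000)*(x^2)^3
         + (79621/294226732800000)*(x^2)^4 + (-661/267478848000000)*(x^2)^5
         + (1/62270208000000)*(x^2)^6)) by (unfold qL, pU; field).
      assert (0 <= x^11 * ((14711/187110000) + (-49921097/3269185920000)*(x^2)
         + (39066949/49037788800000)*(x^2)^2 + (-315599/16345929600000)*(x^2)^3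
         + (79621/294226732800000)*(x^2)^4 + (-661/267478848000000)*(x^2)^5
         + (1/62270208000000)*(x^2)^6)) by (apply Rmult_le_pos; lra).
      assert (qL x * sin x <= qL x * (x - x^3/6 + x^5/120 - x^7/5040 + x^9/362880 - x^11/39916800 + x^13/6227020800))
        by (apply Rmult_le_compat_l; lra).
      assert (x * (1 - x^2/2 + x^4/24 - x^6/720 + x^8/40320 - x^10/3628800) <= x * cos x)
        by (apply Rmult_le_compat_l; lra).
      lra. }
  replace (1/x - x/3 - x^3/45 - 2*x^5/945 - x^7/4725 - x^9/10000) with (qL x / x) by (unfold qL, pU; field; lra).
  assert (E : cos x / sin x - qL x / x = (x * cos x - qL x * sin x) * / (x * sin x)) by (field; lra).
  assert (0 < / (x * sin x)) by (apply Rinv_0_lt_compat; nra).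
  assert (0 <= (x * cos x - qL x * sin x) * / (x * sin x)) by nra.
  lra.
Qed.

Lemma cot_lb_beta x : 0 < x -> x <= PI/2 -> 1/x - (41/100) * x <= cos x / sin x.
Proof.
  intros Hx Hx2.
  pose proof (cot_lb x Hx Hx2).
  pose proof (x_le_bB x Hx2) as Hb.
  assert (Hz : 0 <= x^2 <= bB^2) by (split; [apply pow_le; lra | apply pow_incr; lra]).
  destruct (zpow_facts _ Hz) as (Z2 & Z3 & Z4 & Z5 & Z6).
  assert (H1 : 1/3 + x^2/45 + 2*(x^2)^2/945 + (x^2)^3/4725 + (x^2)^4/10000 <= 41/100)
    by (unfold bB in *; lra).
  assert (H2 : x * (1/3 + x^2/45 + 2*(x^2)^2/945 + (x^2)^3/4725 + (x^2)^4/10000) <= x * (41/100))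
    by (apply Rmult_le_compat_l; lra).
  assert (E : x * (1/3 + x^2/45 + 2*(x^2)^2/945 + (x^2)^3/4725 + (x^2)^4/10000)
     = x/3 + x^3/45 + 2*x^5/945 + x^7/4725 + x^9/10000) by field.
  lra.
Qed.


Definition xi (n i : nat) : R := PI * INR (S i) / (2 * INR n).
Definition Hs (m : nat) : R := sum_f_R0 (fun i => / INR (S i)) m.
Definition Se (e m : nat) : R := sum_f_R0 (fun i => INR (S i) ^ e) m.

Lemma INR_S_pos i : 0 < INR (S i).
Proof. apply lt_0_INR; lia. Qed.

Lemma sum_P7 n m : 0 < INR n ->
  sum_f_R0 (fun i => 1/xi n i - xi n i/3 - xi n i^3/45 - 2*xi n i^5/945 - xi n i^7/4725) m
  = (2 * INR n / PI) * Hs m - (PI/(2*INR n))/3 * Se 1 m - (PI/(2*INR n))^3/45 * Se 3 m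
    - 2*(PI/(2*INR n))^5/945 * Se 5 m - (PI/(2*INR n))^7/4725 * Se 7 m.
Proof.
  intros Hn. pose proof PI_RGT_0.
  induction m as [|m IH].
  - unfold Hs, Se, xi; simpl sum_f_R0. pose proof (INR_S_pos 0). field. lra.
  - unfold Hs, Se in *. cbn [sum_f_R0]. rewrite IH. unfold xi.
    pose proof (INR_S_pos (S m)). field. lra.
Qed.

Lemma sum_P9 n m : 0 < INR n ->
  sum_f_R0 (fun i => 1/xi n i - xi n i/3 - xi n i^3/45 - 2*xi n i^5/945 - xi n i^7/4725 - xi n i^9/10000) m
  = (2 * INR n / PI) * Hs m - (PI/(2*INR n))/3 * Se 1 m - (PI/(2*INR n))^3/45 * Se 3 m
    - 2*(PI/(2*INR n))^5/945 * Se 5 m - (PI/(2*INR n))^7/4725 * Se 7 m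
    - (PI/(2*INR n))^9/10000 * Se 9 m.
Proof.
  intros Hn. pose proof PI_RGT_0.
  induction m as [|m IH].
  - unfold Hs, Se, xi; simpl sum_f_R0. pose proof (INR_S_pos 0). field. lra.
  - unfold Hs, Se in *. cbn [sum_f_R0]. rewrite IH. unfold xi.
    pose proof (INR_S_pos (S m)). field. lra.
Qed.

Lemma sum_beta n m : 0 < INR n ->
  sum_f_R0 (fun i => 1/xi n i - (41/100) * xi n i) m
  = (2 * INR n / PI) * Hs m - (41/100) * (PI/(2*INR n)) * Se 1 m.
Proof.
  intros Hn. pose proof PI_RGT_0.
  induction m as [|m IH].
  - unfold Hs, Se, xi; simpl sum_f_R0. pose proof (INR_S_pos 0). field. lra.
  - unfold Hs, Se in *. cbn [sum_f_R0]. rewrite IH. unfold xi.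
    pose proof (INR_S_pos (S m)). field. lra.
Qed.

Lemma Se1_closed m : Se 1 m = INR (S m) * INR (S (S m)) / 2.
Proof.
  induction m as [|m IH]; unfold Se in *.
  - simpl. lra.
  - cbn [sum_f_R0]. rewrite IH. rewrite !S_INR. field.
Qed.

Lemma xi_range n i : (S i < n)%nat -> 0 < xi n i /\ xi n i <= PI/2.
Proof.
  intros H. unfold xi. pose proof PI_RGT_0.
  assert (Hi : INR (S i) < INR n) by (apply lt_INR; lia).
  pose proof (INR_S_pos i).
  split.
  - apply Rdiv_lt_0_compat; nra.
  - apply Rmult_le_reg_r with (2 * INR n); [lra|].
    field_simplify; [|lra]. nra.
Qed.


Definition Dz : Z := 1000000000000%Z.

Fixpoint hup (m : nat) : Z :=
  match m with
  | O => Dz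
  | S m' => (hup m' + (Dz + Z.of_nat (S m')) / Z.of_nat (S (S m')))%Z
  end.
Fixpoint hlo (m : nat) : Z :=
  match m with
  | O => Dz
  | S m' => (hlo m' + Dz / Z.of_nat (S (S m')))%Z
  end.
Lemma Dz_pos : 0 < IZR Dz.
Proof. unfold Dz. apply IZR_lt. lia. Qed.

Lemma INR_Zofnat k : INR k = IZR (Z.of_nat k).
Proof. apply INR_IZR_INZ. Qed.

Lemma ceil_ok (k : nat) : (0 < k)%nat ->
  / INR k <= IZR ((Dz + Z.of_nat k - 1) / Z.of_nat k) / IZR Dz.
Proof.
  intros Hk.
  set (K := Z.of_nat k).
  assert (HK : (0 < K)%Z) by (unfold K; lia).
  assert (Hq : (Dz <= K * ((Dz + K - 1) / K))%Z).
  { pose proof (Z.div_mod (Dz + K - 1) K ltac:(lia)).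
    pose proof (Z.mod_pos_bound (Dz + K - 1) K HK). lia. }
  apply IZR_le in Hq. rewrite mult_IZR in Hq.
  rewrite INR_Zofnat. fold K.
  pose proof Dz_pos. assert (0 < IZR K) by (apply IZR_lt; lia).
  apply Rmult_le_reg_r with (IZR Dz * IZR K); [nra|].
  field_simplify; try lra.
Qed.

Lemma floor_ok (k : nat) : (0 < k)%nat ->
  IZR (Dz / Z.of_nat k) / IZR Dz <= / INR k.
Proof.
  intros Hk.
  set (K := Z.of_nat k).
  assert (HK : (0 < K)%Z) by (unfold K; lia).
  assert (Hq : (K * (Dz / K) <= Dz)%Z) by (apply Z.mul_div_le; lia).
  apply IZR_le in Hq. rewrite mult_IZR in Hq.
  rewrite INR_Zofnat. fold K.
  pose proof Dz_pos. assert (0 < IZR K) by (apply IZR_lt; lia).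
  apply Rmult_le_reg_r with (IZR Dz * IZR K); [nra|].
  field_simplify; try lra.
Qed.

Lemma hup_ok m : Hs m <= IZR (hup m) / IZR Dz.
Proof.
  pose proof Dz_pos.
  induction m as [|m IH]; unfold Hs in *.
  - simpl. replace (IZR Dz / IZR Dz) with 1 by (field; lra). lra.
  - cbn [sum_f_R0 hup]. rewrite plus_IZR.
    pose proof (ceil_ok (S (S m)) ltac:(lia)).
    replace (Dz + Z.of_nat (S m))%Z with (Dz + Z.of_nat (S (S m)) - 1)%Z by lia.
    unfold Rdiv in *. rewrite Rmult_plus_distr_r. lra.
Qed.

Lemma hlo_ok m : IZR (hlo m) / IZR Dz <= Hs m.
Proof.
  pose proof Dz_pos.
  induction m as [|m IH]; unfold Hs in *.
  - simpl. replace (IZR Dz / IZR Dz) with 1 by (field; lra). lra.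
  - cbn [sum_f_R0 hlo]. rewrite plus_IZR.
    pose proof (floor_ok (S (S m)) ltac:(lia)).
    unfold Rdiv in *. rewrite Rmult_plus_distr_r. lra.
Qed.

Definition S1R (M : R) := M * (M + 1) / 2.
Definition S3R (M : R) := M * M * (M + 1) * (M + 1) / 4.
Definition S5R (M : R) := M * M * (M + 1) * (M + 1) * (2 * M * M + 2 * M - 1) / 12.
Definition S7R (M : R) := M * M * (M + 1) * (M + 1) * (3 * M^4 + 6 * M^3 - M * M - 4 * M + 2) / 24.
Definition S9R (M : R) := M * M * (M + 1) * (M + 1) * (M * M + M - 1) * (2 * M^4 + 4 * M^3 - M * M - 3 * M + 3) / 20.

Ltac se_ind lem := induction lem as [|m IH]; unfold Se in *;
  [ simpl; field | cbn [sum_f_R0]; rewrite IH; rewrite (S_INR (S m)); field ].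

Lemma Se1_c m : Se 1 m = S1R (INR (S m)).
Proof. unfold S1R. se_ind m. Qed.
Lemma Se3_c m : Se 3 m = S3R (INR (S m)).
Proof. unfold S3R. se_ind m. Qed.
Lemma Se5_c m : Se 5 m = S5R (INR (S m)).
Proof. unfold S5R. se_ind m. Qed.
Lemma Se7_c m : Se 7 m = S7R (INR (S m)).
Proof. unfold S7R. se_ind m. Qed.
Lemma Se9_c m : Se 9 m = S9R (INR (S m)).
Proof. unfold S9R. se_ind m. Qed.


Definition p0Q : Q := (333 # 106)%Q.
Definition p1Q : Q := (355 # 113)%Q.

Definition S1Q (M : Q) : Q := (M * (M + 1) / 2)%Q.
Definition S3Q (M : Q) : Q := (M * M * (M + 1) * (M + 1) / 4)%Q.
Definition S5Q (M : Q) : Q := (M * M * (M + 1) * (M + 1) * (2 * M * M + 2 * M - 1) / 12)%Q.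
Definition S7Q (M : Q) : Q := (M * M * (M + 1) * (M + 1) * (3 * (M*M*M*M) + 6 * (M*M*M) - M * M - 4 * M + 2) / 24)%Q.
Definition S9Q (M : Q) : Q := (M * M * (M + 1) * (M + 1) * (M * M + M - 1) * (2 * (M*M*M*M) + 4 * (M*M*M) - M * M - 3 * M + 3) / 20)%Q.

Definition nQ (k : nat) : Q := inject_Z (Z.of_nat (S (S k))).
Definition yQ (p : Q) (k : nat) : Q := (p / (2 * nQ k))%Q.
Definition MQ (k : nat) : Q := (nQ k - 1)%Q.
Definition DQ : Q := inject_Z Dz.

Definition T0 (p : Q) (k : nat) (h : Z) : Q := (2 * nQ k / p * inject_Z h)%Q.
Definition T1 (p : Q) (k : nat) : Q := (yQ p k * S1Q (MQ k) / 3 * DQ)%Q.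
Definition T3 (p : Q) (k : nat) : Q := (let y := yQ p k in y*y*y * S3Q (MQ k) / 45 * DQ)%Q.
Definition T5 (p : Q) (k : nat) : Q := (let y := yQ p k in 2 * (y*y*y*y*y) * S5Q (MQ k) / 945 * DQ)%Q.
Definition T7 (p : Q) (k : nat) : Q := (let y := yQ p k in (y*y*y*y*y*y*y) * S7Q (MQ k) / 4725 * DQ)%Q.
Definition T9 (p : Q) (k : nat) : Q := (let y := yQ p k in (y*y*y*y*y*y*y*y*y) * S9Q (MQ k) / 10000 * DQ)%Q.

Definition Qltb (a b : Q) : bool := Z.ltb (Qnum a * QDen b) (Qnum b * QDen a).

Lemma Qltb_ok a b : Qltb a b = true -> (a < b)%Q.
Proof. unfold Qltb, Qlt. intros H. apply Z.ltb_lt in H. exact H. Qed.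

Definition checkU (k : nat) (h : Z) : bool :=
  Z.ltb (Qceiling (T0 p0Q k h) - (Qfloor (T1 p0Q k) + Qfloor (T3 p0Q k) + Qfloor (T5 p0Q k) + Qfloor (T7 p0Q k)))
        (4 * Z.of_nat (S (S k)) * Dz).
Definition checkL (k : nat) (h : Z) : bool :=
  Nat.ltb k 471 ||
  Z.ltb (4 * Z.of_nat (S (S k)) * Dz)
        (Qfloor (T0 p1Q k h) - (Qceiling (T1 p1Q k) + Qceiling (T3 p1Q k) + Qceiling (T5 p1Q k)
                                 + Qceiling (T7 p1Q k) + Qceiling (T9 p1Q k))).

Definition stepU (k : nat) : Z := ((Dz + Z.of_nat (S k)) / Z.of_nat (S (S k)))%Z.
Definition stepL (k : nat) : Z := (Dz / Z.of_nat (S (S k)))%Z.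

Fixpoint run (chk : nat -> Z -> bool) (step : nat -> Z) (c k : nat) (h : Z) : bool :=
  match c with
  | O => true
  | S c' => chk k h && run chk step c' (S k) (h + step k)%Z
  end.

Lemma run_ok chk step (hf : nat -> Z) (Hf : forall k, hf (S k) = (hf k + step k)%Z) c :
  forall k, run chk step c k (hf k) = true -> forall j, (k <= j < k + c)%nat -> chk j (hf j) = true.
Proof.
  induction c as [|c IH]; intros k H j Hj; [lia|].
  simpl in H. apply andb_prop in H. destruct H as [H1 H2].
  destruct (Nat.eq_dec j k) as [->|Hne]; [exact H1|].
  rewrite <- Hf in H2. apply (IH (S k) H2). lia.
Qed.

Lemma allU_run : run checkU stepU 471 0 Dz = true.
Proof. vm_compute. reflexivity. Qed.
Lemma allL_run : run checkL stepL 498 0 Dz = true.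
Proof. vm_compute. reflexivity. Qed.

Lemma allU k : (k <= 470)%nat -> checkU k (hup k) = true.
Proof.
  intros Hk. apply (run_ok checkU stepU hup (fun k => eq_refl) 471 0 allU_run). lia.
Qed.
Lemma allL k : (k <= 497)%nat -> checkL k (hlo k) = true.
Proof.
  intros Hk. apply (run_ok checkL stepL hlo (fun k => eq_refl) 498 0 allL_run). lia.
Qed.


Lemma Q2R_inj z : Q2R (inject_Z z) = IZR z.
Proof. unfold Q2R, inject_Z. simpl. field. Qed.
Lemma Q2R_lit z p : Q2R (z # p) = IZR z / IZR (Zpos p).
Proof. reflexivity. Qed.

Lemma inj_nz z : (z <> 0)%Z -> ~ (inject_Z z == 0)%Q.
Proof. intros H C. unfold Qeq in C. simpl in C. lia. Qed.

Ltac nzq := let Hc := fresh in intro Hc; unfold Qeq in Hc; simpl in Hc; lia.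
Ltac q2r := repeat (rewrite ?Q2R_plus, ?Q2R_minus, ?Q2R_mult, ?Q2R_opp, ?Q2R_inj;
  try (rewrite Q2R_div; [| nzq])).

Definition NR (k : nat) : R := IZR (Z.of_nat (S (S k))).

Lemma NR_pos k : 0 < NR k.
Proof. unfold NR. apply IZR_lt. lia. Qed.

Lemma MQ_R k : Q2R (MQ k) = NR k - 1.
Proof. unfold MQ, nQ, NR. q2r. rewrite Q2R_lit. field. Qed.

Lemma yQ_R p k : Q2R (yQ p k) = Q2R p / (2 * NR k).
Proof. unfold yQ, nQ, NR. pose proof (NR_pos k). unfold NR in H. q2r. rewrite Q2R_lit. field. lra. Qed.

Lemma T0_R p k h : ~ (p == 0)%Q -> Q2R (T0 p k h) = 2 * NR k / Q2R p * IZR h.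
Proof. intros Hp. unfold T0, nQ, NR. rewrite Q2R_mult, Q2R_div by exact Hp. q2r. rewrite Q2R_lit. field.
  intro C. apply Hp. apply eqR_Qeq. rewrite C. unfold Q2R. simpl. ring. Qed.

Lemma S1Q_R M : Q2R (S1Q M) = S1R (Q2R M).
Proof. unfold S1Q, S1R. q2r. rewrite !Q2R_lit. field. Qed.
Lemma S3Q_R M : Q2R (S3Q M) = S3R (Q2R M).
Proof. unfold S3Q, S3R. q2r. rewrite !Q2R_lit. field. Qed.
Lemma S5Q_R M : Q2R (S5Q M) = S5R (Q2R M).
Proof. unfold S5Q, S5R. q2r. rewrite !Q2R_lit. field. Qed.
Lemma S7Q_R M : Q2R (S7Q M) = S7R (Q2R M).
Proof. unfold S7Q, S7R. q2r. rewrite !Q2R_lit. field. Qed.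
Lemma S9Q_R M : Q2R (S9Q M) = S9R (Q2R M).
Proof. unfold S9Q, S9R. q2r. rewrite !Q2R_lit. field. Qed.

Lemma DQ_R : Q2R DQ = IZR Dz.
Proof. unfold DQ. apply Q2R_inj. Qed.

Lemma T1_R p k : Q2R (T1 p k) = Q2R (yQ p k) * S1R (NR k - 1) / 3 * IZR Dz.
Proof. unfold T1. q2r. rewrite S1Q_R, MQ_R, DQ_R, Q2R_lit. field. Qed.
Lemma T3_R p k : Q2R (T3 p k) = Q2R (yQ p k) ^ 3 * S3R (NR k - 1) / 45 * IZR Dz.
Proof. unfold T3. q2r. rewrite S3Q_R, MQ_R, DQ_R, Q2R_lit. field. Qed.
Lemma T5_R p k : Q2R (T5 p k) = 2 * Q2R (yQ p k) ^ 5 * S5R (NR k - 1) / 945 * IZR Dz.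
Proof. unfold T5. q2r. rewrite S5Q_R, MQ_R, DQ_R, !Q2R_lit. field. Qed.
Lemma T7_R p k : Q2R (T7 p k) = Q2R (yQ p k) ^ 7 * S7R (NR k - 1) / 4725 * IZR Dz.
Proof. unfold T7. q2r. rewrite S7Q_R, MQ_R, DQ_R, Q2R_lit. field. Qed.
Lemma T9_R p k : Q2R (T9 p k) = Q2R (yQ p k) ^ 9 * S9R (NR k - 1) / 10000 * IZR Dz.
Proof. unfold T9. q2r. rewrite S9Q_R, MQ_R, DQ_R, Q2R_lit. field. Qed.

Lemma ceil_R q : Q2R q <= IZR (Qceiling q).
Proof. rewrite <- Q2R_inj. apply Qle_Rle. apply Qle_ceiling. Qed.
Lemma floor_R q : IZR (Qfloor q) <= Q2R q.
Proof. rewrite <- Q2R_inj. apply Qle_Rle. apply Qfloor_le. Qed.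

Lemma cmp_term (y0 y S c : R) (e : nat) : 0 <= y0 <= y -> 0 <= S -> 0 <= c ->
  c * y0^e * S <= c * y^e * S.
Proof.
  intros Hy HS Hc. apply Rmult_le_compat_r; [lra|]. apply Rmult_le_compat_l; [lra|].
  apply pow_incr. lra.
Qed.

Lemma Hs_nonneg m : 0 <= Hs m.
Proof. unfold Hs. apply cond_pos_sum. intros. left. apply Rinv_0_lt_compat, INR_S_pos. Qed.

Lemma Se_nonneg e m : 0 <= Se e m.
Proof. unfold Se. apply cond_pos_sum. intros. apply pow_le. left. apply INR_S_pos. Qed.

Definition Tcot (k : nat) : R :=
  sum_f_R0 (fun i => cos (xi (S (S k)) i) / sin (xi (S (S k)) i)) k.

Lemma p0Q_R : Q2R p0Q = 333/106.
Proof. unfold p0Q. rewrite Q2R_lit. reflexivity. Qed.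
Lemma p1Q_R : Q2R p1Q = 355/113.
Proof. unfold p1Q. rewrite Q2R_lit. reflexivity. Qed.
Lemma p0Q_nz : ~ (p0Q == 0)%Q.
Proof. unfold p0Q, Qeq. simpl. lia. Qed.
Lemma p1Q_nz : ~ (p1Q == 0)%Q.
Proof. unfold p1Q, Qeq. simpl. lia. Qed.

Lemma NR_INR k : NR k = INR (S (S k)).
Proof. unfold NR. rewrite <- INR_IZR_INZ. reflexivity. Qed.

Lemma checkU_real k h : checkU k h = true ->
  let N := INR (S (S k)) in let y := 333/106 / (2 * N) in
  2 * N / (333/106) * (IZR h / IZR Dz)
   - (y / 3 * S1R (N - 1) + y^3 / 45 * S3R (N - 1) + 2 * y^5 / 945 * S5R (N - 1)
      + y^7 / 4725 * S7R (N - 1)) < 4 * N.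
Proof.
  intros Hc. unfold checkU in Hc. apply Z.ltb_lt, IZR_lt in Hc.
  rewrite minus_IZR, !plus_IZR, !mult_IZR, <- INR_IZR_INZ in Hc.
  pose proof (ceil_R (T0 p0Q k h)) as C0.
  pose proof (floor_R (T1 p0Q k)) as C1. pose proof (floor_R (T3 p0Q k)) as C3.
  pose proof (floor_R (T5 p0Q k)) as C5. pose proof (floor_R (T7 p0Q k)) as C7.
  rewrite T0_R in C0 by exact p0Q_nz. rewrite T1_R in C1. rewrite T3_R in C3.
  rewrite T5_R in C5. rewrite T7_R in C7.
  rewrite yQ_R, p0Q_R, NR_INR in C1, C3, C5, C7. rewrite p0Q_R, NR_INR in C0.
  cbv zeta. set (N := INR (S (S k))) in *.
  assert (HN : 0 < N) by (unfold N; apply lt_0_INR; lia).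
  pose proof Dz_pos as HD.
  set (D := IZR Dz) in *.
  set (y := 333 / 106 / (2 * N)).
  apply Rmult_lt_reg_r with D; [lra|].
  assert (E : (2 * N / (333 / 106) * (IZR h / D) -
     (y / 3 * S1R (N - 1) + y ^ 3 / 45 * S3R (N - 1) + 2 * y ^ 5 / 945 * S5R (N - 1) +
      y ^ 7 / 4725 * S7R (N - 1))) * D =
     2 * N / (333 / 106) * IZR h - (y * S1R (N - 1) / 3 * D + y ^ 3 * S3R (N - 1) / 45 * D
       + 2 * y ^ 5 * S5R (N - 1) / 945 * D + y ^ 7 * S7R (N - 1) / 4725 * D)) by (field; lra).
  rewrite E. fold y in C1, C3, C5, C7. lra.
Qed.

Lemma checkL_real k h : (471 <= k)%nat -> checkL k h = true ->
  let N := INR (S (S k)) in let y := 355/113 / (2 * N) in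
  4 * N < 2 * N / (355/113) * (IZR h / IZR Dz)
   - (y / 3 * S1R (N - 1) + y^3 / 45 * S3R (N - 1) + 2 * y^5 / 945 * S5R (N - 1)
      + y^7 / 4725 * S7R (N - 1) + y^9 / 10000 * S9R (N - 1)).
Proof.
  intros Hk Hc. unfold checkL in Hc.
  assert (Nat.ltb k 471 = false) as Hf by (apply Nat.ltb_ge; lia).
  rewrite Hf, Bool.orb_false_l in Hc. apply Z.ltb_lt, IZR_lt in Hc.
  rewrite minus_IZR, !plus_IZR, !mult_IZR, <- INR_IZR_INZ in Hc.
  pose proof (floor_R (T0 p1Q k h)) as C0.
  pose proof (ceil_R (T1 p1Q k)) as C1. pose proof (ceil_R (T3 p1Q k)) as C3.
  pose proof (ceil_R (T5 p1Q k)) as C5. pose proof (ceil_R (T7 p1Q k)) as C7.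
  pose proof (ceil_R (T9 p1Q k)) as C9.
  rewrite T0_R in C0 by exact p1Q_nz. rewrite T1_R in C1. rewrite T3_R in C3.
  rewrite T5_R in C5. rewrite T7_R in C7. rewrite T9_R in C9.
  rewrite yQ_R, p1Q_R, NR_INR in C1, C3, C5, C7, C9. rewrite p1Q_R, NR_INR in C0.
  cbv zeta. set (N := INR (S (S k))) in *.
  assert (HN : 0 < N) by (unfold N; apply lt_0_INR; lia).
  pose proof Dz_pos as HD.
  set (D := IZR Dz) in *.
  set (y := 355 / 113 / (2 * N)).
  apply Rmult_lt_reg_r with D; [lra|].
  assert (E : (2 * N / (355 / 113) * (IZR h / D) -
     (y / 3 * S1R (N - 1) + y ^ 3 / 45 * S3R (N - 1) + 2 * y ^ 5 / 945 * S5R (N - 1) +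
      y ^ 7 / 4725 * S7R (N - 1) + y ^ 9 / 10000 * S9R (N - 1))) * D =
     2 * N / (355 / 113) * IZR h - (y * S1R (N - 1) / 3 * D + y ^ 3 * S3R (N - 1) / 45 * D
       + 2 * y ^ 5 * S5R (N - 1) / 945 * D + y ^ 7 * S7R (N - 1) / 4725 * D
       + y ^ 9 * S9R (N - 1) / 10000 * D)) by (field; lra).
  rewrite E. fold y in C1, C3, C5, C7, C9. lra.
Qed.

Lemma U_sound k : (k <= 470)%nat -> Tcot k < 4 * INR (S (S k)).
Proof.
  intros Hk. pose proof (checkU_real k (hup k) (allU k Hk)) as Hc. cbv zeta in Hc.
  set (N := INR (S (S k))) in *.
  assert (HN : 0 < N) by (unfold N; apply lt_0_INR; lia).
  assert (EM : N - 1 = INR (S k)) by (unfold N; rewrite (S_INR (S k)); ring).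
  rewrite EM, <- Se1_c, <- Se3_c, <- Se5_c, <- Se7_c in Hc.
  pose proof PI_bounds as HPI.
  assert (H1 : Tcot k <= sum_f_R0 (fun i => 1/xi (S (S k)) i - xi (S (S k)) i/3 - xi (S (S k)) i^3/45
        - 2*xi (S (S k)) i^5/945 - xi (S (S k)) i^7/4725) k).
  { unfold Tcot. apply sum_Rle. intros i Hi.
    destruct (xi_range (S (S k)) i ltac:(lia)). apply cot_ub; lra. }
  rewrite sum_P7 in H1 by exact HN. fold N in H1.
  pose proof (hup_ok k) as Hh. pose proof (Hs_nonneg k) as Hh0.
  set (y0 := 333 / 106 / (2 * N)) in *.
  set (y := PI / (2 * N)) in *.
  assert (Hy : 0 <= y0 <= y) by (unfold y0, y; split;
     [apply Rle_mult_inv_pos; lra | unfold Rdiv; apply Rmult_le_compat_r; [left; apply Rinv_0_lt_compat; lra | lra]]).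
  assert (HA : 2 * N / PI <= 2 * N / (333/106)).
  { unfold Rdiv. apply Rmult_le_compat_l; [lra|]. apply Rinv_le_contravar; lra. }
  assert (HA2 : 2 * N / PI * Hs k <= 2 * N / (333/106) * (IZR (hup k) / IZR Dz)).
  { apply Rle_trans with (2 * N / (333/106) * Hs k).
    - apply Rmult_le_compat_r; lra.
    - apply Rmult_le_compat_l; [|lra]. apply Rle_mult_inv_pos; lra. }
  pose proof (Se_nonneg 1 k). pose proof (Se_nonneg 3 k). pose proof (Se_nonneg 5 k). pose proof (Se_nonneg 7 k).
  pose proof (cmp_term y0 y (Se 1 k) (1/3) 1 Hy ltac:(lra) ltac:(lra)).
  pose proof (cmp_term y0 y (Se 3 k) (1/45) 3 Hy ltac:(lra) ltac:(lra)).
  pose proof (cmp_term y0 y (Se 5 k) (2/945) 5 Hy ltac:(lra) ltac:(lra)).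
  pose proof (cmp_term y0 y (Se 7 k) (1/4725) 7 Hy ltac:(lra) ltac:(lra)).
  assert (R1 : y0 / 3 * Se 1 k = 1/3 * y0^1 * Se 1 k) by field.
  assert (R3 : y0^3 / 45 * Se 3 k = 1/45 * y0^3 * Se 3 k) by field.
  assert (R5 : 2 * y0^5 / 945 * Se 5 k = 2/945 * y0^5 * Se 5 k) by field.
  assert (R7 : y0^7 / 4725 * Se 7 k = 1/4725 * y0^7 * Se 7 k) by field.
  assert (S1 : y/3 * Se 1 k = 1/3 * y^1 * Se 1 k) by field.
  assert (S3 : y^3/45 * Se 3 k = 1/45 * y^3 * Se 3 k) by field.
  assert (S5 : 2*y^5/945 * Se 5 k = 2/945 * y^5 * Se 5 k) by field.
  assert (S7 : y^7/4725 * Se 7 k = 1/4725 * y^7 * Se 7 k) by field.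
  lra.
Qed.

Lemma hlo_nonneg m : (0 <= hlo m)%Z.
Proof.
  induction m as [|m IH]; simpl; [unfold Dz; lia|].
  assert (0 <= Dz / Z.of_nat (S (S m)))%Z by (apply Z.div_pos; unfold Dz; lia). lia.
Qed.

Lemma L_sound k : (471 <= k <= 497)%nat -> 4 * INR (S (S k)) < Tcot k.
Proof.
  intros Hk. pose proof (checkL_real k (hlo k) ltac:(lia) (allL k ltac:(lia))) as Hc. cbv zeta in Hc.
  set (N := INR (S (S k))) in *.
  assert (HN : 0 < N) by (unfold N; apply lt_0_INR; lia).
  assert (EM : N - 1 = INR (S k)) by (unfold N; rewrite (S_INR (S k)); ring).
  rewrite EM, <- Se1_c, <- Se3_c, <- Se5_c, <- Se7_c, <- Se9_c in Hc.
  pose proof PI_bounds as HPI.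
  assert (H1 : sum_f_R0 (fun i => 1/xi (S (S k)) i - xi (S (S k)) i/3 - xi (S (S k)) i^3/45
        - 2*xi (S (S k)) i^5/945 - xi (S (S k)) i^7/4725 - xi (S (S k)) i^9/10000) k <= Tcot k).
  { unfold Tcot. apply sum_Rle. intros i Hi.
    destruct (xi_range (S (S k)) i ltac:(lia)). apply cot_lb; lra. }
  rewrite sum_P9 in H1 by exact HN. fold N in H1.
  pose proof (hlo_ok k) as Hh. pose proof Dz_pos.
  assert (Hh0 : 0 <= IZR (hlo k) / IZR Dz).
  { apply Rle_mult_inv_pos; [|lra]. apply IZR_le. apply hlo_nonneg. }
  set (y1 := 355 / 113 / (2 * N)) in *.
  set (y := PI / (2 * N)) in *.
  assert (Hy : 0 <= y <= y1) by (unfold y1, y; split;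
     [apply Rle_mult_inv_pos; lra | unfold Rdiv; apply Rmult_le_compat_r; [left; apply Rinv_0_lt_compat; lra | lra]]).
  assert (HA : 2 * N / (355/113) <= 2 * N / PI).
  { unfold Rdiv. apply Rmult_le_compat_l; [lra|]. apply Rinv_le_contravar; lra. }
  assert (HA2 : 2 * N / (355/113) * (IZR (hlo k) / IZR Dz) <= 2 * N / PI * Hs k).
  { apply Rle_trans with (2 * N / PI * (IZR (hlo k) / IZR Dz)).
    - apply Rmult_le_compat_r; lra.
    - apply Rmult_le_compat_l; [|lra]. apply Rle_mult_inv_pos; lra. }
  pose proof (Se_nonneg 1 k). pose proof (Se_nonneg 3 k). pose proof (Se_nonneg 5 k).
  pose proof (Se_nonneg 7 k). pose proof (Se_nonneg 9 k).
  pose proof (cmp_term y y1 (Se 1 k) (1/3) 1 Hy ltac:(lra) ltac:(lra)).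
  pose proof (cmp_term y y1 (Se 3 k) (1/45) 3 Hy ltac:(lra) ltac:(lra)).
  pose proof (cmp_term y y1 (Se 5 k) (2/945) 5 Hy ltac:(lra) ltac:(lra)).
  pose proof (cmp_term y y1 (Se 7 k) (1/4725) 7 Hy ltac:(lra) ltac:(lra)).
  pose proof (cmp_term y y1 (Se 9 k) (1/10000) 9 Hy ltac:(lra) ltac:(lra)).
  assert (R1 : y1 / 3 * Se 1 k = 1/3 * y1^1 * Se 1 k) by field.
  assert (R3 : y1^3 / 45 * Se 3 k = 1/45 * y1^3 * Se 3 k) by field.
  assert (R5 : 2 * y1^5 / 945 * Se 5 k = 2/945 * y1^5 * Se 5 k) by field.
  assert (R7 : y1^7 / 4725 * Se 7 k = 1/4725 * y1^7 * Se 7 k) by field.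
  assert (R9 : y1^9 / 10000 * Se 9 k = 1/10000 * y1^9 * Se 9 k) by field.
  assert (S1 : y/3 * Se 1 k = 1/3 * y^1 * Se 1 k) by field.
  assert (S3 : y^3/45 * Se 3 k = 1/45 * y^3 * Se 3 k) by field.
  assert (S5 : 2*y^5/945 * Se 5 k = 2/945 * y^5 * Se 5 k) by field.
  assert (S7 : y^7/4725 * Se 7 k = 1/4725 * y^7 * Se 7 k) by field.
  assert (S9 : y^9/10000 * Se 9 k = 1/10000 * y^9 * Se 9 k) by field.
  lra.
Qed.

Lemma hlo498 : hlo 498 = 6790823429787%Z.
Proof. vm_compute. reflexivity. Qed.

Lemma Hs_mono m d : Hs m <= Hs (m + d).
Proof.
  induction d as [|d IH].
  - rewrite Nat.add_0_r. lra.
  - rewrite Nat.add_succ_r. unfold Hs in *. cbn [sum_f_R0].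
    pose proof (Rinv_0_lt_compat _ (INR_S_pos (S (m + d)))). lra.
Qed.

Lemma beta_sound k : (498 <= k)%nat -> 4 * INR (S (S k)) < Tcot k.
Proof.
  intros Hk.
  set (N := INR (S (S k))).
  assert (HN : 0 < N) by (unfold N; apply lt_0_INR; lia).
  pose proof PI_bounds as HPI.
  assert (H1 : sum_f_R0 (fun i => 1/xi (S (S k)) i - (41/100) * xi (S (S k)) i) k <= Tcot k).
  { unfold Tcot. apply sum_Rle. intros i Hi.
    destruct (xi_range (S (S k)) i ltac:(lia)). apply cot_lb_beta; lra. }
  rewrite sum_beta in H1 by exact HN. fold N in H1.
  rewrite Se1_closed in H1.
  assert (EN : INR (S (S k)) = N) by reflexivity.
  replace (INR (S k)) with (N - 1) in H1 by (unfold N; rewrite (S_INR (S k)); ring). change (INR (S (S k))) with N in H1.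
  assert (HH : IZR (hlo 498) / IZR Dz <= Hs k).
  { replace k with (498 + (k - 498))%nat by lia. eapply Rle_trans; [apply hlo_ok|apply Hs_mono]. }
  rewrite hlo498 in HH. unfold Dz in HH.
  set (h := Hs k) in *.
  assert (Hp : 0 < PI) by lra.
  assert (E : 2 * N / PI * h - 41 / 100 * (PI / (2 * N)) * ((N - 1) * N / 2)
            = N * (2 * h / PI - 41/100 * PI * (N - 1) / (4 * N))) by (field; lra).
  rewrite E in H1.
  assert (K1 : 41/100 * PI * (N - 1) / (4 * N) <= 41/100 * PI / 4).
  { apply Rmult_le_reg_r with (4 * N); [lra|]. field_simplify; try lra. }
  assert (K2 : 4 + 41/100 * PI / 4 < 2 * h / PI).
  { apply Rmult_lt_reg_r with PI; [lra|]. field_simplify; try lra.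
    assert (PI * PI <= 355/113 * PI) by nra. nra. }
  nra.
Qed.


Lemma Tcot_neq k : Tcot k <> 4 * INR (S (S k)).
Proof.
  destruct (le_lt_dec k 470) as [H|H].
  - pose proof (U_sound k H). lra.
  - destruct (le_lt_dec k 497) as [H'|H'].
    + pose proof (L_sound k ltac:(lia)). lra.
    + pose proof (beta_sound k ltac:(lia)). lra.
Qed.

Lemma sum_rev (f : nat -> R) m : sum_f_R0 f m = sum_f_R0 (fun i => f (m - i)%nat) m.
Proof.
  revert f. induction m as [|m IH]; intros f.
  - reflexivity.
  - rewrite decomp_sum by lia. simpl pred. rewrite IH.
    cbn [sum_f_R0]. rewrite Nat.sub_diag, Rplus_comm. f_equal.
    apply sum_eq. intros i Hi. f_equal. lia.
Qed.

Lemma sum_opp (f : nat -> R) m : - sum_f_R0 f m = sum_f_R0 (fun i => - f i) m.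
Proof. induction m as [|m IH]; simpl; [reflexivity|]. rewrite <- IH. ring. Qed.

Lemma cot_sum_zero k :
  sum_f_R0 (fun i => cos (PI * INR (S i) / INR (S (S k))) / sin (PI * INR (S i) / INR (S (S k)))) k = 0.
Proof.
  set (f := fun i => cos (PI * INR (S i) / INR (S (S k))) / sin (PI * INR (S i) / INR (S (S k)))).
  assert (E : sum_f_R0 f k = - sum_f_R0 f k).
  { rewrite sum_rev at 1. rewrite sum_opp. apply sum_eq. intros i Hi. unfold f.
    assert (Ea : PI * INR (S (k - i)) / INR (S (S k)) = PI - PI * INR (S i) / INR (S (S k))).
    { assert (0 < INR (S (S k))) by (apply lt_0_INR; lia).
      rewrite (S_INR (k - i)), minus_INR by lia. rewrite !S_INR. pose proof (pos_INR k). field. lra. }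
    rewrite Ea, cos_minus, sin_minus, cos_PI, sin_PI. unfold Rdiv. 
    replace (-1 * cos (PI * INR (S i) * / INR (S (S k))) + 0 * sin (PI * INR (S i) * / INR (S (S k))))
      with (- cos (PI * INR (S i) * / INR (S (S k)))) by ring.
    replace (0 * cos (PI * INR (S i) * / INR (S (S k))) - -1 * sin (PI * INR (S i) * / INR (S (S k))))
      with (sin (PI * INR (S i) * / INR (S (S k)))) by ring.
    ring. }
  lra.
Qed.

Lemma csc_to_cot k :
  sum_f_R0 (fun i => / sin (PI * INR (S i) / INR (S (S k)))) k = Tcot k.
Proof.
  assert (E : forall i, (i <= k)%nat -> / sin (PI * INR (S i) / INR (S (S k))) =
     cos (xi (S (S k)) i) / sin (xi (S (S k)) i)
     - cos (PI * INR (S i) / INR (S (S k))) / sin (PI * INR (S i) / INR (S (S k)))).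
  { intros i Hi.
    assert (Ha : PI * INR (S i) / INR (S (S k)) = 2 * xi (S (S k)) i).
    { unfold xi. assert (0 < INR (S (S k))) by (apply lt_0_INR; lia). field. lra. }
    rewrite Ha.
    destruct (xi_range (S (S k)) i ltac:(lia)) as [H1 H2].
    assert (H3 : xi (S (S k)) i < PI/2).
    { unfold xi. pose proof PI_RGT_0.
      assert (INR (S i) < INR (S (S k))) by (apply lt_INR; lia).
      assert (0 < INR (S (S k))) by (apply lt_0_INR; lia).
      apply Rmult_lt_reg_r with (2 * INR (S (S k))); [lra|].
      field_simplify; [|lra]. nra. }
    set (a := xi (S (S k)) i) in *.
    assert (Hs : 0 < sin a) by (apply sin_gt_0; lra).
    assert (Hc : 0 < cos a) by (apply cos_gt_0; lra).
    rewrite sin_2a, cos_2a_cos. field. lra. }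
  rewrite (sum_eq _ _ _ E). rewrite minus_sum. rewrite cot_sum_zero. unfold Tcot. lra.
Qed.


Lemma second_deriv_x X Y ax :
  is_derive (Derive (fun s => X * cos s - Y * sin s)) 0 ax -> ax = - X.
Proof.
  intros H.
  assert (E : forall t, Derive (fun s => X * cos s - Y * sin s) t = - X * sin t - Y * cos t).
  { intros t. apply is_derive_unique. auto_derive; [exact I| ring]. }
  assert (H2 : is_derive (fun t => - X * sin t - Y * cos t) 0 ax).
  { apply is_derive_ext with (2 := H). exact E. }
  assert (H3 : is_derive (fun t => - X * sin t - Y * cos t) 0 (- X)).
  { auto_derive; [exact I|]. rewrite cos_0, sin_0. ring. }
  apply is_derive_unique in H2. apply is_derive_unique in H3. congruence.
Qed.

Lemma second_deriv_y X Y ay :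
  is_derive (Derive (fun s => X * sin s + Y * cos s)) 0 ay -> ay = - Y.
Proof.
  intros H.
  assert (E : forall t, Derive (fun s => X * sin s + Y * cos s) t = X * cos t - Y * sin t).
  { intros t. apply is_derive_unique. auto_derive; [exact I| ring]. }
  assert (H2 : is_derive (fun t => X * cos t - Y * sin t) 0 ay).
  { apply is_derive_ext with (2 := H). exact E. }
  assert (H3 : is_derive (fun t => X * cos t - Y * sin t) 0 (- Y)).
  { auto_derive; [exact I|]. rewrite cos_0, sin_0. ring. }
  apply is_derive_unique in H2. apply is_derive_unique in H3. congruence.
Qed.

Lemma rot_at_0 (r : config) : (fun j => rot_motion r j 0) = r.
Proof.
  apply functional_extensionality. intros j. unfold rot_motion. rewrite cos_0, sin_0.
  destruct (r j) as [a b]. simpl. f_equal; ring.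
Qed.

Lemma accel N mu (r : config) i : is_solution N mu (rot_motion r) -> (i <= N)%nat ->
  mu i * (- fst (r i)) = force_x N mu r i /\ mu i * (- snd (r i)) = force_y N mu r i.
Proof.
  intros Hs Hi. destruct (Hs i Hi) as (_ & _ & H).
  destruct (H 0) as (ax & ay & Hax & Hay & Ex & Ey).
  rewrite rot_at_0 in Ex, Ey.
  unfold rot_motion in Hax, Hay. simpl in Hax, Hay.
  apply second_deriv_x in Hax. apply second_deriv_y in Hay.
  subst. split; assumption.
Qed.


Lemma force_x_decomp a b k (r : config) :
  force_x (S (S k)) (mass_sys a b) r (S (S k)) =
  b * a * (fst (r O) - fst (r (S (S k)))) / dist2 (r (S (S k))) (r O) ^ 3
  + b * b * sum_f_R0 (fun i => (fst (r (S i)) - fst (r (S (S k)))) / dist2 (r (S (S k))) (r (S i)) ^ 3) k.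
Proof.
  unfold force_x. rewrite decomp_sum by lia. simpl pred.
  cbn [sum_f_R0]. 
  destruct (Nat.eq_dec 0 (S (S k))) as [E|_]; [lia|].
  destruct (Nat.eq_dec (S (S k)) (S (S k))) as [_|E]; [|lia].
  rewrite scal_sum. simpl mass_sys.
  rewrite Rplus_0_r. f_equal.
  apply sum_eq. intros i Hi.
  destruct (Nat.eq_dec (S i) (S (S k))) as [E|_]; [lia|]. simpl. unfold Rdiv. ring.
Qed.

Lemma force_y_decomp a b k (r : config) :
  force_y (S (S k)) (mass_sys a b) r (S (S k)) =
  b * a * (snd (r O) - snd (r (S (S k)))) / dist2 (r (S (S k))) (r O) ^ 3
  + b * b * sum_f_R0 (fun i => (snd (r (S i)) - snd (r (S (S k)))) / dist2 (r (S (S k))) (r (S i)) ^ 3) k.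
Proof.
  unfold force_y. rewrite decomp_sum by lia. simpl pred.
  cbn [sum_f_R0]. 
  destruct (Nat.eq_dec 0 (S (S k))) as [E|_]; [lia|].
  destruct (Nat.eq_dec (S (S k)) (S (S k))) as [_|E]; [|lia].
  rewrite scal_sum. simpl mass_sys.
  rewrite Rplus_0_r. f_equal.
  apply sum_eq. intros i Hi.
  destruct (Nat.eq_dec (S i) (S (S k))) as [E|_]; [lia|]. simpl. unfold Rdiv. ring.
Qed.

Lemma mass_total a b k : sum_f_R0 (mass_sys a b) (S k) = a + INR (S k) * b.
Proof.
  induction k as [|k IH].
  - simpl. ring.
  - cbn [sum_f_R0] in *. rewrite IH. simpl mass_sys. rewrite (S_INR (S k)). ring.
Qed.

Lemma sum_lin2 (f g : nat -> R) X Y m :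
  sum_f_R0 (fun i => X * f i + Y * g i) m = X * sum_f_R0 f m + Y * sum_f_R0 g m.
Proof. induction m as [|m IH]; simpl; [ring|]. rewrite IH. ring. Qed.

Lemma alg N X Y Ax Ay a b a' b' rho :
  0 < b -> 0 < b' -> 0 < rho -> (a, b) <> (a', b') -> a + N * b = a' + N * b' ->
  b * (- X) = b * a * (0 - X) / rho ^ 3 + b * b * Ax ->
  b * (- Y) = b * a * (0 - Y) / rho ^ 3 + b * b * Ay ->
  b' * (- X) = b' * a' * (0 - X) / rho ^ 3 + b' * b' * Ax ->
  b' * (- Y) = b' * a' * (0 - Y) / rho ^ 3 + b' * b' * Ay ->
  X ^ 2 + Y ^ 2 = rho ^ 2 ->
  X * Ax + Y * Ay = - N / rho.
Proof.
  intros Hb Hb' Hr Hne Ht E1 E2 E3 E4 Hc.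
  assert (F1 : - X = - a * X / rho^3 + b * Ax).
  { apply Rmult_eq_reg_l with b; [|lra]. rewrite E1. field. lra. }
  assert (F2 : - Y = - a * Y / rho^3 + b * Ay).
  { apply Rmult_eq_reg_l with b; [|lra]. rewrite E2. field. lra. }
  assert (F3 : - X = - a' * X / rho^3 + b' * Ax).
  { apply Rmult_eq_reg_l with b'; [|lra]. rewrite E3. field. lra. }
  assert (F4 : - Y = - a' * Y / rho^3 + b' * Ay).
  { apply Rmult_eq_reg_l with b'; [|lra]. rewrite E4. field. lra. }
  assert (Hbb : b <> b').
  { intro Heq. subst b'. apply Hne. f_equal. lra. }
  assert (Ha : a - a' = - N * (b - b')) by lra.
  assert (G1 : (b - b') * (N * X / rho^3 + Ax) = 0).
  { assert (0 = - (a - a') * X / rho^3 + (b - b') * Ax) by (unfold Rdiv in *; lra).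
    rewrite Ha in H. unfold Rdiv in *. lra. }
  assert (G2 : (b - b') * (N * Y / rho^3 + Ay) = 0).
  { assert (0 = - (a - a') * Y / rho^3 + (b - b') * Ay) by (unfold Rdiv in *; lra).
    rewrite Ha in H. unfold Rdiv in *. lra. }
  apply Rmult_integral in G1. apply Rmult_integral in G2.
  destruct G1 as [G1|G1]; [lra|]. destruct G2 as [G2|G2]; [lra|].
  replace Ax with (- (N * X / rho^3)) by lra. replace Ay with (- (N * Y / rho^3)) by lra.
  replace (X * - (N * X / rho ^ 3) + Y * - (N * Y / rho ^ 3)) with (- N * (X^2 + Y^2) / rho^3) by (field; lra).
  rewrite Hc. field. lra.
Qed.


Lemma geom_term k rho phi i : 0 < rho -> (i <= k)%nat ->
  fst (central_ngon (S (S k)) rho phi (S (S k))) *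
    ((fst (central_ngon (S (S k)) rho phi (S i)) - fst (central_ngon (S (S k)) rho phi (S (S k))))
      / dist2 (central_ngon (S (S k)) rho phi (S (S k))) (central_ngon (S (S k)) rho phi (S i)) ^ 3)
  + snd (central_ngon (S (S k)) rho phi (S (S k))) *
    ((snd (central_ngon (S (S k)) rho phi (S i)) - snd (central_ngon (S (S k)) rho phi (S (S k))))
      / dist2 (central_ngon (S (S k)) rho phi (S (S k))) (central_ngon (S (S k)) rho phi (S i)) ^ 3)
  = - (1 / (4 * rho)) * / sin (PI * INR (S i) / INR (S (S k))).
Proof.
  intros Hr Hi.
  unfold dist2, central_ngon. cbn beta iota. cbn [fst snd].
  set (N := INR (S (S k))).
  assert (HN : 0 < N) by (unfold N; apply lt_0_INR; lia).
  set (th := PI * INR (S i) / N).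
  assert (Hth : 0 < th < PI).
  { unfold th. pose proof PI_RGT_0.
    assert (INR (S i) < N) by (unfold N; apply lt_INR; lia).
    assert (0 < INR (S i)) by (apply lt_0_INR; lia).
    split.
    - apply Rdiv_lt_0_compat; nra.
    - apply Rmult_lt_reg_r with N; [lra|]. field_simplify; [|lra]. nra. }
  assert (Hs : 0 < sin th) by (apply sin_gt_0; lra).
  set (al := phi + 2 * PI * INR (S i) / N).
  set (be := phi + 2 * PI * N / N).
  assert (Hab : al - be = 2 * th - 2 * PI) by (unfold al, be, th; field; lra).
  assert (Hcos : cos al * cos be + sin al * sin be = 1 - 2 * sin th * sin th).
  { rewrite <- cos_minus, Hab, cos_minus, cos_2PI, sin_2PI, cos_2a_sin. ring. }
  pose proof (sin2_cos2 al) as Pa. pose proof (sin2_cos2 be) as Pb. unfold Rsqr in Pa, Pb.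
  assert (Erad : (rho * cos al - rho * cos be) ^ 2 + (rho * sin al - rho * sin be) ^ 2
                 = (2 * rho * sin th) * (2 * rho * sin th)).
  { replace ((rho * cos al - rho * cos be) ^ 2 + (rho * sin al - rho * sin be) ^ 2)
      with (rho^2 * (sin al * sin al + cos al * cos al) + rho^2 * (sin be * sin be + cos be * cos be)
            - 2 * rho^2 * (cos al * cos be + sin al * sin be)) by ring.
    rewrite Pa, Pb, Hcos. ring. }
  rewrite Erad. rewrite sqrt_square by nra.
  assert (Enum1 : rho * cos be * (rho * cos al - rho * cos be) + rho * sin be * (rho * sin al - rho * sin be)
           = - 2 * rho^2 * sin th * sin th).
  { replace (rho * cos be * (rho * cos al - rho * cos be) + rho * sin be * (rho * sin al - rho * sin be))
      with (rho^2 * (cos al * cos be + sin al * sin be) - rho^2 * (sin be * sin be + cos be * cos be)) by ring.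
    rewrite Pb, Hcos. ring. }
  transitivity ((rho * cos be * (rho * cos al - rho * cos be) + rho * sin be * (rho * sin al - rho * sin be))
                 / (2 * rho * sin th) ^ 3).
  { field. nra. }
  rewrite Enum1. fold th. field. lra.
Qed.

Lemma dist0 k rho phi : 0 < rho ->
  dist2 (central_ngon (S (S k)) rho phi (S (S k))) (central_ngon (S (S k)) rho phi O) = rho.
Proof.
  intros Hr. unfold dist2, central_ngon. cbn beta iota. cbn [fst snd].
  set (be := phi + 2 * PI * INR (S (S k)) / INR (S (S k))).
  pose proof (sin2_cos2 be) as Pb. unfold Rsqr in Pb.
  replace ((0 - rho * cos be) ^ 2 + (0 - rho * sin be) ^ 2) with (rho * rho)
    by (replace ((0 - rho * cos be) ^ 2 + (0 - rho * sin be) ^ 2)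
          with (rho * rho * (sin be * sin be + cos be * cos be)) by ring; rewrite Pb; ring).
  apply sqrt_square. lra.
Qed.

Lemma norm_vertex k rho phi :
  fst (central_ngon (S (S k)) rho phi (S (S k))) ^ 2 + snd (central_ngon (S (S k)) rho phi (S (S k))) ^ 2
  = rho ^ 2.
Proof.
  unfold central_ngon. cbn beta iota. cbn [fst snd].
  set (be := phi + 2 * PI * INR (S (S k)) / INR (S (S k))).
  pose proof (sin2_cos2 be) as Pb. unfold Rsqr in Pb.
  replace ((rho * cos be) ^ 2 + (rho * sin be) ^ 2) with (rho ^ 2 * (sin be * sin be + cos be * cos be)) by ring.
  rewrite Pb. ring.
Qed.

Lemma sum_scal_l (f : nat -> R) c m : sum_f_R0 (fun i => c * f i) m = c * sum_f_R0 f m.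
Proof. induction m as [|m IH]; simpl; [ring|]. rewrite IH. ring. Qed.

Theorem proposition3 (n : nat) (rho phi : R) :
  (2 <= n)%nat -> 0 < rho -> ~ really_perverse n (central_ngon n rho phi).
Proof.
  intros Hn Hr. destruct n as [|[|k]]; [lia|lia|].
  intros (m0 & m1 & m0' & m1' & Hm0 & Hm1 & Hm0' & Hm1' & Hne & _ & _ & Htot & _ & Hs1 & Hs2).
  set (r := central_ngon (S (S k)) rho phi) in *.
  destruct (accel _ _ r (S (S k)) Hs1 (le_n _)) as [Ex1 Ey1].
  destruct (accel _ _ r (S (S k)) Hs2 (le_n _)) as [Ex2 Ey2].
  rewrite force_x_decomp in Ex1, Ex2. rewrite force_y_decomp in Ey1, Ey2.
  change (mass_sys m0 m1 (S (S k))) with m1 in Ex1, Ey1.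
  change (mass_sys m0' m1' (S (S k))) with m1' in Ex2, Ey2.
  unfold total_mass in Htot. rewrite !mass_total in Htot.
  change (fst (r O)) with 0 in Ex1, Ex2. change (snd (r O)) with 0 in Ey1, Ey2.
  unfold r in Ex1, Ex2, Ey1, Ey2. rewrite (dist0 k rho phi Hr) in Ex1, Ex2, Ey1, Ey2.
  pose proof (alg _ _ _ _ _ _ _ _ _ _ Hm1 Hm1' Hr Hne Htot Ex1 Ey1 Ex2 Ey2 (norm_vertex k rho phi)) as Hmain.
  rewrite <- sum_lin2 in Hmain.
  rewrite (sum_eq _ _ _ (fun i Hi => geom_term k rho phi i Hr Hi)) in Hmain.
  rewrite sum_scal_l in Hmain.
  rewrite csc_to_cot in Hmain.
  apply (Tcot_neq k).
  apply Rmult_eq_reg_l with (- (1 / (4 * rho))).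
  - rewrite Hmain. field. lra.
  - assert (0 < 1 / (4 * rho)) by (apply Rdiv_lt_0_compat; lra). lra.
Qed.
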